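(* Let $\alpha>0$ and let $n$ be a positive integer with $\alpha n>1$. Let $q\in\mathbb{C}$ satisfy $0<|q|\leq 1-1/(\alpha n)$ and let $z\in\mathbb{C}$ satisfy $|z|=|q|^{-n-1/2}$. Then $U:=\prod_{m=1}^{\infty}(1+zq^m)$ satisfies $$|U|\geq |q|^{-n^2/2}e^{-(\pi^2/3)(\alpha n(\alpha n-1))^{1/2}}.$$ *)

(* Defs.v *)
From Stdlib Require Import Reals.
From Coquelicot Require Import Coquelicot.
Open Scope R_scope.

Fixpoint cpow (q : C) (m : nat) : C :=
  match m with
  | O => 1%C
  | S k => Cmult q (cpow q k)
  end.

Fixpoint partial_prod (z q : C) (N : nat) : C :=
  match N with
  | O => 1%C
  | S k => Cmult (partial_prod z q k) (Cplus 1%C (Cmult z (cpow q (S k))))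
  end.

Definition is_inf_prod (z q U : C) : Prop :=
  filterlim (partial_prod z q) eventually (locally U).

(* Main.v *)
Require Import Defs.
From Stdlib Require Import Reals Lra Lia.
From Coquelicot Require Import Coquelicot.
Open Scope R_scope.
Fixpoint sumN (f : nat -> R) (n : nat) : R :=
  match n with O => 0 | S k => sumN f k + f k end.

Lemma dH k x : is_derive (fun x => sin x * cos x ^ k) x (cos x * cos x ^ k - INR k * sin x ^ 2 * cos x ^ (pred k)).
Proof. auto_derive; auto. ring. Qed.
Lemma dG (N : R) k m x : is_derive (fun x => N * x^2 * sin x * cos x ^ k + x * cos x ^ m) x
  (N * 2 * x * sin x * cos x ^ k + N * x^2 * cos x * cos x ^ k - N * x^2 * sin x ^ 2 * INR k * cos x ^ pred k
   + cos x ^ m - x * INR m * sin x * cos x ^ pred m).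
Proof. auto_derive; auto. ring. Qed.

Definition Iw n : R := RInt (fun x => cos x ^ (2*n)) 0 (PI/2).
Definition Jw n : R := RInt (fun x => x^2 * cos x ^ (2*n)) 0 (PI/2).

Lemma isI n : is_RInt (fun x => cos x ^ (2*n)) 0 (PI/2) (Iw n).
Proof. unfold Iw, Jw; apply (@RInt_correct R_CompleteNormedModule), (@ex_RInt_continuous R_CompleteNormedModule); intros; apply (@ex_derive_continuous R_AbsRing R_NormedModule); auto_derive; auto. Qed.
Lemma isJ n : is_RInt (fun x => x^2 * cos x ^ (2*n)) 0 (PI/2) (Jw n).
Proof. unfold Iw, Jw; apply (@RInt_correct R_CompleteNormedModule), (@ex_RInt_continuous R_CompleteNormedModule); intros; apply (@ex_derive_continuous R_AbsRing R_NormedModule); auto_derive; auto. Qed.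

Lemma sin2 x : sin x ^ 2 = 1 - cos x ^ 2.
Proof. pose proof (sin2_cos2 x). unfold Rsqr in H. nra. Qed.

Lemma zpow k : 0 ^ (S k) = 0.
Proof. simpl; ring. Qed.

Lemma wallis p : 2 * INR (S p) * Iw (S p) = INR (2*p+1) * Iw p.
Proof.
  set (df := fun x => cos x * cos x ^ (2*p+1) - INR (2*p+1) * sin x ^ 2 * cos x ^ (pred (2*p+1))).
  assert (h : is_RInt df 0 (PI/2) (minus (sin (PI/2) * cos (PI/2) ^ (2*p+1)) (sin 0 * cos 0 ^ (2*p+1)))).
  { apply (is_RInt_derive (fun x => sin x * cos x ^ (2*p+1))).
    - intros; apply dH.
    - intros; apply (@ex_derive_continuous R_AbsRing R_NormedModule); unfold df; auto_derive; auto. }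
  rewrite sin_PI2, cos_PI2, sin_0 in h.
  replace (2*p+1)%nat with (S (2*p)) in h by lia.
  rewrite zpow in h.
  assert (h2 := is_RInt_minus _ _ _ _ _ _ (is_RInt_scal _ _ _ (2 * INR (S p)) _ (isI (S p)))
                    (is_RInt_scal _ _ _ (INR (2*p+1)) _ (isI p))).
  apply (@is_RInt_unique R_CompleteNormedModule) in h.
  assert (h3 : is_RInt df 0 (PI/2) (minus (scal (2 * INR (S p)) (Iw (S p))) (scal (INR (2 * p + 1)) (Iw p)))).
  { eapply is_RInt_ext; [|exact h2]. intros x _. unfold df.
    rewrite sin2. replace (pred (2*p+1)) with (2*p)%nat by lia.
    replace (2 * S p)%nat with (2*p + 2)%nat by lia.
    rewrite !pow_add. rewrite ?S_INR, ?plus_INR, ?mult_INR. unfold minus, plus, opp, scal; simpl. unfold mult; simpl.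
    ring. }
  apply (@is_RInt_unique R_CompleteNormedModule) in h3. rewrite h in h3.
  set (a := INR (S p)) in *. set (b := INR (2*p+1)) in *. unfold minus, plus, opp, scal in h3; simpl in h3. unfold mult in h3; simpl in h3. lra.
Qed.

Lemma kern p : Iw (S p) + 2 * INR (S p) ^ 2 * Jw (S p) = INR (S p) * INR (2*p+1) * Jw p.
Proof.
  set (N := INR (S p)).
  set (df := fun x => N * 2 * x * sin x * cos x ^ (2*p+1) + N * x^2 * cos x * cos x ^ (2*p+1)
     - N * x^2 * sin x ^ 2 * INR (2*p+1) * cos x ^ pred (2*p+1)
   + cos x ^ (2 * S p) - x * INR (2 * S p) * sin x * cos x ^ pred (2 * S p)).
  assert (h : is_RInt df 0 (PI/2)
     (minus (N * (PI/2)^2 * sin (PI/2) * cos (PI/2) ^ (2*p+1) + (PI/2) * cos (PI/2) ^ (2 * S p))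
            (N * 0^2 * sin 0 * cos 0 ^ (2*p+1) + 0 * cos 0 ^ (2 * S p)))).
  { apply (is_RInt_derive (fun x => N * x^2 * sin x * cos x ^ (2*p+1) + x * cos x ^ (2 * S p))).
    - intros; apply dG.
    - intros; apply (@ex_derive_continuous R_AbsRing R_NormedModule); unfold df; auto_derive; auto. }
  rewrite sin_PI2, cos_PI2, sin_0 in h.
  replace (2*p+1)%nat with (S (2*p)) in h by lia.
  replace (2*S p)%nat with (S (2*p+1)) in h by lia.
  rewrite !zpow in h.
  assert (h2 := is_RInt_plus _ _ _ _ _ _ (isI (S p)) (is_RInt_minus _ _ _ _ _ _ (is_RInt_scal _ _ _ (2 * N^2) _ (isJ (S p)))
                    (is_RInt_scal _ _ _ (N * INR (2*p+1)) _ (isJ p)))).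
  apply (@is_RInt_unique R_CompleteNormedModule) in h.
  assert (h3 : is_RInt df 0 (PI/2) (plus (Iw (S p)) (minus (scal (2 * N^2) (Jw (S p))) (scal (N * INR (2 * p + 1)) (Jw p))))).
  { eapply is_RInt_ext; [|exact h2]. intros x _. unfold df.
    rewrite sin2. replace (pred (2*p+1)) with (2*p)%nat by lia.
    replace (pred (2*S p)) with (2*p+1)%nat by lia.
    replace (2 * S p)%nat with (2*p + 2)%nat by lia.
    rewrite !pow_add. unfold N. rewrite ?S_INR, ?plus_INR, ?mult_INR. unfold minus, plus, opp, scal; simpl. unfold mult; simpl.
    ring. }
  apply (@is_RInt_unique R_CompleteNormedModule) in h3. rewrite h in h3.
  set (b := INR (2*p+1)) in *. unfold minus, plus, opp, scal in h3; simpl in h3. unfold mult in h3; simpl in h3. lra.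
Qed.

Lemma I0 : Iw 0 = PI/2.
Proof.
  unfold Iw. simpl. rewrite RInt_const. unfold scal; simpl; unfold mult; simpl. ring.
Qed.

Lemma J0 : Jw 0 = (PI/2)^3/3.
Proof.
  unfold Jw.
  assert (h : is_RInt (fun x => x^2) 0 (PI/2) (minus ((PI/2)^3/3) (0^3/3))).
  { apply (is_RInt_derive (fun x => x^3/3)).
    - intros; auto_derive; auto. field.
    - intros; apply (@ex_derive_continuous R_AbsRing R_NormedModule); auto_derive; auto. }
  apply (@is_RInt_unique R_CompleteNormedModule) in h.
  replace (fun x => x^2 * cos x ^ (2*0)) with (fun x:R => x^2).
  rewrite h. unfold minus, plus, opp; simpl. change (PI / 2 * (PI / 2 * (PI / 2 * 1)) / 3 + - (0 * (0 * (0 * 1)) / 3) = PI / 2 * (PI / 2 * (PI / 2 * 1)) / 3). field.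
  apply FunctionalExtensionality.functional_extensionality; intros; simpl; ring.
Qed.

Lemma Ipos n : 0 < Iw n.
Proof.
  induction n. rewrite I0. pose proof PI_RGT_0; lra.
  pose proof (wallis n). pose proof (pos_INR n).
  rewrite S_INR, plus_INR, mult_INR in H. simpl in H.
  assert (0 < INR (S n)) by (apply lt_0_INR; lia).
  nra.
Qed.

Lemma Jnn n : 0 <= Jw n.
Proof.
  unfold Jw. apply RInt_ge_0. pose proof PI_RGT_0; lra.
  exists (Jw n). apply isJ.
  intros. apply Rmult_le_pos. apply pow2_ge_0.
  replace (2*n)%nat with (n+n)%nat by lia. rewrite pow_add. apply Rle_0_sqr.
Qed.

Definition Rj n := Jw n / Iw n.

Lemma step p : 1 / INR (S p) ^ 2 = 2 * Rj p - 2 * Rj (S p).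
Proof.
  pose proof (wallis p). pose proof (kern p). pose proof (Ipos p). pose proof (Ipos (S p)).
  unfold Rj.
  assert (HN : 0 < INR (S p)) by (apply lt_0_INR; lia).
  assert (Hb : INR (2*p+1) = 2 * INR (S p) - 1) by (rewrite S_INR, plus_INR, mult_INR; simpl; ring).
  rewrite Hb in H, H0.
  assert (Hb1 : 0 < 2 * INR (S p) - 1) by (rewrite <- Hb; apply lt_0_INR; lia).
  assert (E1 : Iw p = 2 * INR (S p) * Iw (S p) / (2 * INR (S p) - 1)) by (field_simplify_eq; lra).
  assert (E2 : Jw p = (Iw (S p) + 2 * INR (S p) ^ 2 * Jw (S p)) / (INR (S p) * (2 * INR (S p) - 1))).
  { field_simplify_eq; [lra| split; lra]. }
  rewrite E1, E2. field. repeat split; lra.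
Qed.

Lemma basel_sum N : sumN (fun j => 1 / INR (S j) ^ 2) N = 2 * Rj 0 - 2 * Rj N.
Proof.
  induction N. simpl. ring.
  transitivity (sumN (fun j => 1 / INR (S j) ^ 2) N + 1 / INR (S N)^2). reflexivity. rewrite IHN, step. ring.
Qed.

Lemma basel N : sumN (fun j => 1 / INR (S j) ^ 2) N <= PI^2/6.
Proof.
  rewrite basel_sum. unfold Rj at 1. rewrite I0, J0.
  assert (0 <= Rj N) by (unfold Rj; apply Rdiv_le_0_compat; [apply Jnn|apply Ipos]).
  pose proof PI_RGT_0. 
  replace (2 * ((PI/2)^3/3 / (PI/2))) with (PI^2/6) by (field; lra). lra.
Qed.
Lemma sumN_S f n : sumN f (S n) = sumN f n + f n.
Proof. reflexivity. Qed.

Lemma sumN_ext f g n : (forall i, (i < n)%nat -> f i = g i) -> sumN f n = sumN g n.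
Proof. induction n; intros H; simpl; auto. rewrite IHn, H; auto. Qed.

Lemma dpow_div k y : 0 < INR k -> is_derive (fun y => y^k/INR k) y (y^(pred k)).
Proof. intros Hk. auto_derive; auto. field. lra. Qed.

Lemma d_sum J y : is_derive (fun y => sumN (fun j => y^(S j)/INR (S j)) J) y (sumN (fun j => y^j) J).
Proof.
  induction J; simpl sumN.
  - apply (is_derive_const 0).
  - apply (is_derive_plus (fun y => sumN (fun j => y^(S j)/INR (S j)) J) (fun y => y^(S J)/INR (S J))).
    exact IHJ.
    apply (dpow_div (S J)). apply lt_0_INR; lia.
Qed.

Lemma d_rem k y : 0 < INR k -> y < 1 -> is_derive (fun y => y^k/(INR k * (1-y))) y
   (y^(pred k)/(1-y) + y^k/(INR k * (1-y)^2)).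
Proof. intros Hk Hy. auto_derive. apply Rmult_integral_contrapositive_currified; lra. field; repeat split; lra. Qed.

Lemma geom y J : y < 1 -> sumN (fun j => y^j) J = (1 - y^J)/(1-y).
Proof. intros Hy. induction J. simpl. field; lra. rewrite sumN_S, IHJ. simpl. field. lra. Qed.

Lemma sumN_zero J : sumN (fun j => 0^(S j)/INR (S j)) J = 0.
Proof. induction J. reflexivity. rewrite sumN_S, IHJ. simpl. unfold Rdiv. ring. Qed.

Lemma lnb x J : 0 <= x < 1 ->
  - ln (1 - x) <= sumN (fun j => x^(S j)/INR (S j)) J + x^(S J)/(INR (S J) * (1-x)).
Proof.
  intros [Hx0 Hx1].
  set (g := fun y => ln (1-y) + (sumN (fun j => y^(S j)/INR (S j)) J + y^(S J)/(INR (S J) * (1-y)))).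
  set (dg := fun y => -1/(1-y) + (sumN (fun j => y^j) J + (y^(pred (S J))/(1-y) + y^(S J)/(INR (S J) * (1-y)^2)))).
  assert (HSJ : 0 < INR (S J)) by (apply lt_0_INR; lia).
  assert (D : forall y, y < 1 -> is_derive g y (dg y)).
  { intros y Hy. unfold g, dg. apply (is_derive_plus (fun y => ln (1-y)) (fun y => sumN (fun j => y^(S j)/INR (S j)) J + y^(S J)/(INR (S J) * (1-y)))).
    - auto_derive. lra. field. lra.
    - apply (is_derive_plus (fun y => sumN (fun j => y^(S j)/INR (S j)) J)). apply d_sum. apply d_rem; auto. }
  destruct (MVT_gen g 0 x dg) as [c [Hc E]].
  - intros y Hy. apply D. rewrite Rmax_right in Hy; lra.
  - intros y Hy. rewrite Rmax_right in Hy by lra. apply continuity_pt_filterlim.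
    apply (@ex_derive_continuous R_AbsRing R_NormedModule). eexists. apply D. lra.
  - rewrite Rmin_left, Rmax_right in Hc by lra.
    assert (g 0 = 0). { unfold g. rewrite sumN_zero. replace (1-0) with 1 by ring. rewrite ln_1. simpl. unfold Rdiv. ring. }
    assert (0 <= dg c).
    { unfold dg. rewrite geom by lra. simpl pred.
      assert (0 <= c ^ S J) by (apply pow_le; lra).
      assert (0 < 1 - c) by lra.
      replace (-1 / (1 - c) + ((1 - c ^ J) / (1 - c) + (c ^ J / (1 - c) + c ^ S J / (INR (S J) * (1 - c) ^ 2))))
        with (c ^ S J / (INR (S J) * (1 - c) ^ 2)) by (field; lra).
      apply Rdiv_le_0_compat; auto. apply Rmult_lt_0_compat; auto. apply pow_lt; lra. }
    unfold g in E, H. nra.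
Qed.

Fixpoint prodN (f : nat -> R) (n : nat) : R :=
  match n with O => 1 | S k => prodN f k * f k end.
Lemma prodN_S f n : prodN f (S n) = prodN f n * f n.
Proof. reflexivity. Qed.
Lemma prodN_ext f g n : (forall i, (i < n)%nat -> f i = g i) -> prodN f n = prodN g n.
Proof. induction n; intros H; simpl; auto. rewrite IHn, H; auto. Qed.

Lemma exp_le_mono x y : x <= y -> exp x <= exp y.
Proof. intros [H|H]. left; apply exp_increasing; auto. subst; lra. Qed.

Lemma sumN_plus f g n : sumN (fun i => f i + g i) n = sumN f n + sumN g n.
Proof. induction n. simpl; ring. rewrite !sumN_S, IHn. ring. Qed.
Lemma sumN_scal c f n : sumN (fun i => c * f i) n = c * sumN f n.
Proof. induction n. simpl; ring. rewrite !sumN_S, IHn. ring. Qed.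
Lemma sumN_le f g n : (forall i, (i < n)%nat -> f i <= g i) -> sumN f n <= sumN g n.
Proof. induction n; intros H. simpl; lra. rewrite !sumN_S. assert (f n <= g n) by auto. assert (sumN f n <= sumN g n) by auto. lra. Qed.
Lemma sumN_swap (f : nat -> nat -> R) M J :
  sumN (fun k => sumN (fun j => f k j) J) M = sumN (fun j => sumN (fun k => f k j) M) J.
Proof.
  induction M. simpl. induction J. reflexivity. rewrite sumN_S, <- IHJ. simpl; ring.
  rewrite sumN_S, IHM. rewrite <- sumN_plus. apply sumN_ext. intros; reflexivity.
Qed.
Lemma sumN_const c n : sumN (fun _ => c) n = INR n * c.
Proof. induction n. simpl; ring. rewrite sumN_S, IHn, S_INR. ring. Qed.


Lemma pw_le1 (s : R) (Hs0 : 0 < s) (Hs1 : s < 1) k : 0 <= s^k <= 1.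
Proof. induction k. simpl; lra. simpl. split; nra. Qed.
Lemma pw_lt1 (s : R) (Hs0 : 0 < s) (Hs1 : s < 1) k : (0 < k)%nat -> 0 < s^k < 1.
Proof. intros. destruct k. lia. split. apply pow_lt; lra. simpl. pose proof (pw_le1 s Hs0 Hs1 k). nra. Qed.

Lemma Tm (s : R) (Hs0 : 0 < s) (Hs1 : s < 1) m : INR m * ((1 - s^2)/s) <= (1 - s^(2*m))/s^m.
Proof.
  induction m.
  - simpl. unfold Rdiv. lra.
  - assert (0 < s^m) by (apply pow_lt; lra).
    assert (E : (1 - s^(2*S m))/s^(S m) = (1 - s^(2*m))/s^m + (1-s^2)/s + (1 - s^m)*(1-s)*(1-s^m*s)/(s^m*s)).
    { replace (2 * S m)%nat with (m + m + 2)%nat by lia. replace (2*m)%nat with (m+m)%nat by lia.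
      rewrite !pow_add. simpl. field. split; lra. }
    rewrite E, S_INR.
    assert (0 <= (1 - s^m)*(1-s)*(1-s^m*s)/(s^m*s)).
    { apply Rdiv_le_0_compat. 2: nra.
      assert (s^m <= 1). { clear -Hs0 Hs1. induction m. simpl; lra. simpl. nra. }
      apply Rmult_le_pos; [apply Rmult_le_pos|]; nra. }
    lra.
Qed.

Lemma amgm (s : R) (Hs0 : 0 < s) (Hs1 : s < 1) m : (0 < m)%nat -> s^m / (1 - s^(2*m)) <= s / (INR m * (1 - s^2)).
Proof.
  intros Hm. pose proof (Tm s Hs0 Hs1 m).
  assert (0 < s^m) by (apply pow_lt; lra).
  assert (0 < INR m) by (apply lt_0_INR; lia).
  assert (0 < 1 - s^2) by nra.
  assert (0 < INR m * ((1 - s^2)/s)) by (apply Rmult_lt_0_compat; auto; apply Rdiv_lt_0_compat; lra).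
  replace (s^m / (1 - s^(2*m))) with (/ ((1 - s^(2*m))/s^m)).
  replace (s / (INR m * (1 - s^2))) with (/ (INR m * ((1 - s^2)/s))).
  apply Rinv_le_contravar; auto.
  field; lra.
  assert (0 < (1 - s^(2*m))/s^m) by lra.
  assert (1 - s^(2*m) <> 0). { intro E. rewrite E in H4. unfold Rdiv in H4. lra. }
  field; split; lra.
Qed.

Lemma geo_odd (s : R) (Hs0 : 0 < s) (Hs1 : s < 1) m M : (0 < m)%nat -> sumN (fun k => (s^(2*k+1))^m) M <= s / (INR m * (1 - s^2)).
Proof.
  intros Hm. eapply Rle_trans; [|apply (amgm s Hs0 Hs1); auto].
  assert (0 < s^(2*m) < 1) by (apply (pw_lt1 s Hs0 Hs1); lia).
  rewrite (sumN_ext _ (fun k => s^m * (s^(2*m))^k)).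
  rewrite sumN_scal, geom by lra.
  assert (0 < s^m) by (apply pow_lt; lra).
  assert (0 <= (s^(2*m))^M) by (apply pow_le; lra).
  unfold Rdiv. apply Rmult_le_compat_l. lra.
  assert (0 < /(1 - s^(2*m))) by (apply Rinv_0_lt_compat; lra). nra.
  intros i _. rewrite <- !pow_mult, <- pow_add. f_equal. lia.
Qed.

Definition K0 (s : R) := PI^2/6 * (s/(1-s^2)).

Lemma sum_ln_bound (s : R) (Hs0 : 0 < s) (Hs1 : s < 1) M : - sumN (fun k => ln (1 - s^(2*k+1))) M <= K0 s.
Proof.
  set (L := - sumN (fun k => ln (1 - s^(2*k+1))) M).
  assert (X : forall k, 0 <= s^(2*k+1) <= s).
  { intros k. rewrite pow_add, pow_1. pose proof (pw_le1 s Hs0 Hs1 (2*k)). split; nra. }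
  assert (Hs2 : 0 < 1 - s^2) by nra.
  assert (HJ : forall J, L <= K0 s + INR M * (1 / (INR (S J) * (1 - s)))).
  { intros J.
    assert (HSJ : 0 < INR (S J)) by (apply lt_0_INR; lia).
    apply Rle_trans with (sumN (fun k => sumN (fun j => (s^(2*k+1))^(S j)/INR (S j)) J
                    + (s^(2*k+1))^(S J)/(INR (S J) * (1 - s^(2*k+1)))) M).
    { unfold L. rewrite <- (Rmult_1_l (sumN _ M)), Ropp_mult_distr_l, <- sumN_scal.
      apply sumN_le. intros k _. replace (- (1) * ln (1 - s ^ (2 * k + 1))) with (- ln (1 - s ^ (2 * k + 1))) by ring.
      apply lnb. pose proof (X k); lra. }
    rewrite sumN_plus. apply Rplus_le_compat.
    - rewrite sumN_swap.
      apply Rle_trans with (sumN (fun j => (s/(1-s^2)) * (1 / INR (S j)^2)) J).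
      + apply sumN_le. intros j _.
        rewrite (sumN_ext _ (fun k => / INR (S j) * (s^(2*k+1))^(S j))) by (intros; unfold Rdiv; ring).
        rewrite sumN_scal.
        pose proof (geo_odd s Hs0 Hs1 (S j) M ltac:(lia)).
        assert (0 < INR (S j)) by (apply lt_0_INR; lia).
        replace (s / (1 - s ^ 2) * (1 / INR (S j) ^ 2)) with (/ INR (S j) * (s / (INR (S j) * (1 - s^2)))) by (field; lra).
        apply Rmult_le_compat_l. left; apply Rinv_0_lt_compat; lra. auto.
      + rewrite sumN_scal. unfold K0. rewrite Rmult_comm. apply Rmult_le_compat_r.
        apply Rdiv_le_0_compat; lra. apply basel.
    - rewrite <- sumN_const. apply sumN_le. intros k _.
      pose proof (X k). pose proof (pw_le1 s Hs0 Hs1 (2*k+1)).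
      assert (0 <= (s^(2*k+1))^(S J) <= 1). { rewrite <- pow_mult. apply (pw_le1 s Hs0 Hs1). }
      unfold Rdiv.
      apply Rmult_le_compat. lra. left; apply Rinv_0_lt_compat. apply Rmult_lt_0_compat; lra. lra.
      apply Rinv_le_contravar. apply Rmult_lt_0_compat; lra. apply Rmult_le_compat_l; lra. }
  destruct (Rle_lt_dec L (K0 s)) as [H|H]; auto.
  exfalso.
  set (d := L - K0 s).
  assert (Hd : 0 < d) by (unfold d; lra).
  assert (HM : 0 <= INR M) by apply pos_INR.
  destruct (archimed_cor1 (d * (1 - s) / (INR M + 1))) as [N [HN1 HN2]].
  { apply Rdiv_lt_0_compat. apply Rmult_lt_0_compat; lra. lra. }
  specialize (HJ (pred N)). replace (S (pred N)) with N in HJ by lia.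
  assert (HN : 0 < INR N) by (apply lt_0_INR; lia).
  assert (INR M * (1 / (INR N * (1 - s))) < d).
  { replace (INR M * (1 / (INR N * (1 - s)))) with (INR M / (1 - s) * / INR N) by (field; lra).
    apply Rle_lt_trans with (INR M / (1 - s) * (d * (1 - s) / (INR M + 1))).
    apply Rmult_le_compat_l. apply Rdiv_le_0_compat; lra. lra.
    replace (INR M / (1 - s) * (d * (1 - s) / (INR M + 1))) with (d * (INR M / (INR M + 1))) by (field; lra).
    assert (INR M / (INR M + 1) < 1). { apply (Rmult_lt_reg_r (INR M + 1)). lra. unfold Rdiv. rewrite Rmult_assoc, Rinv_l; lra. }
    nra. }
  unfold d in *. lra.
Qed.

Lemma prod_bound (s : R) (Hs0 : 0 < s) (Hs1 : s < 1) M : exp (- K0 s) <= prodN (fun k => 1 - s^(2*k+1)) M.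
Proof.
  assert (E : prodN (fun k => 1 - s^(2*k+1)) M = exp (sumN (fun k => ln (1 - s^(2*k+1))) M)).
  { induction M. simpl. rewrite exp_0; auto.
    rewrite prodN_S, sumN_S, exp_plus, IHM, exp_ln; auto.
    pose proof (pw_lt1 s Hs0 Hs1 (2*M+1) ltac:(lia)). lra. }
  rewrite E. apply exp_le_mono. pose proof (sum_ln_bound s Hs0 Hs1 M). lra.
Qed.

Lemma prodN_split f n K : prodN f (n + K) = prodN f n * prodN (fun j => f (n + j)%nat) K.
Proof. induction K. rewrite Nat.add_0_r. simpl; ring. rewrite Nat.add_succ_r, !prodN_S, IHK. ring. Qed.
Lemma prodN_nonneg f n : (forall i, (i < n)%nat -> 0 <= f i) -> 0 <= prodN f n.
Proof. induction n; intros H. simpl; lra. rewrite prodN_S. apply Rmult_le_pos; auto. Qed.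
Lemma prodN_le f g n : (forall i, (i < n)%nat -> 0 <= g i <= f i) -> prodN g n <= prodN f n.
Proof.
  induction n; intros H. simpl; lra. rewrite !prodN_S.
  assert (0 <= prodN g n) by (apply prodN_nonneg; intros; apply H; lia).
  pose proof (H n ltac:(lia)).
  apply Rmult_le_compat; try lra. apply IHn; auto.
Qed.
Lemma prodN_mult f g n : prodN (fun i => f i * g i) n = prodN f n * prodN g n.
Proof. induction n. simpl; ring. rewrite !prodN_S, IHn. ring. Qed.
Lemma prodN_front f n : prodN f (S n) = f O * prodN (fun i => f (S i)) n.
Proof. induction n. simpl; ring. rewrite prodN_S, IHn, !prodN_S. ring. Qed.
Lemma prodN_rev f n : prodN (fun i => f (n - 1 - i)%nat) n = prodN f n.
Proof.
  induction n. reflexivity.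
  rewrite prodN_front. replace (S n - 1 - 0)%nat with n by lia.
  rewrite (prodN_ext _ (fun i => f (n - 1 - i)%nat)) by (intros; f_equal; lia).
  rewrite IHn, prodN_S. ring.
Qed.
Lemma prodN_invpow s n : 0 < s -> prodN (fun k => / s^(2*k+1)) n = / s^(n*n).
Proof.
  intros Hs. induction n. simpl. rewrite Rinv_1; reflexivity.
  rewrite prodN_S, IHn. replace (S n * S n)%nat with (n*n + (2*n+1))%nat by lia.
  rewrite (pow_add s (n*n)). field. split; apply pow_nonzero; lra.
Qed.

Lemma cmod_low (w : C) : Cmod w - 1 <= Cmod (1 + w) /\ 1 - Cmod w <= Cmod (1 + w).
Proof.
  split.
  - assert (H : Cmod ((1 + w) + (- (1)))%C <= Cmod (1 + w) + Cmod (- (1))) by apply Cmod_triangle.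
    replace ((1 + w) + (- (1)))%C with w in H by ring.
    rewrite Cmod_opp, Cmod_1 in H. lra.
  - assert (H : Cmod ((1 + w) + (- w))%C <= Cmod (1 + w) + Cmod (- w)) by apply Cmod_triangle.
    replace ((1 + w) + (- w))%C with (RtoC 1) in H by ring.
    rewrite Cmod_opp, Cmod_1 in H. lra.
Qed.

Theorem lemma3 (alpha : R) (n : nat) (q z U : C)
  (Halpha : 0 < alpha) (Hn : (1 <= n)%nat) (Han : alpha * INR n > 1)
  (Hq0 : 0 < Cmod q) (Hq1 : Cmod q <= 1 - 1 / (alpha * INR n))
  (Hz : Cmod z = Rpower (Cmod q) (- INR n - 1 / 2))
  (HU : is_inf_prod z q U) :
  Cmod U >= Rpower (Cmod q) (- (INR n ^ 2) / 2)
            * exp (- (PI ^ 2 / 3) * sqrt (alpha * INR n * (alpha * INR n - 1))).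
Proof.
  set (r := Cmod q) in *. set (a := alpha * INR n) in *.
  assert (Hw : 1 <= a * (1 - r)).
  { assert (a * (1/a) = 1) by (field; lra). nra. }
  assert (Hr1 : r < 1) by nra.
  set (s := sqrt r).
  assert (Hs0 : 0 < s) by (apply sqrt_lt_R0; lra).
  assert (Hs1 : s < 1) by (rewrite <- sqrt_1; apply sqrt_lt_1_alt; lra).
  assert (Hss : s^2 = r) by (unfold s; simpl; rewrite Rmult_1_r; apply sqrt_sqrt; lra).
  assert (Hlnr : ln r = 2 * ln s) by (rewrite <- Hss, ln_pow by lra; simpl; ring).
  assert (Hz' : Cmod z = / s^(2*n+1)).
  { rewrite Hz. unfold Rpower. rewrite <- (exp_ln (s^(2*n+1))) by (apply pow_lt; lra).
    rewrite <- exp_Ropp. f_equal. rewrite ln_pow, Hlnr, plus_INR, mult_INR by lra. simpl. field. }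
  assert (HR : Rpower r (- (INR n ^ 2) / 2) = / s^(n*n)).
  { unfold Rpower. rewrite <- (exp_ln (s^(n*n))) by (apply pow_lt; lra).
    rewrite <- exp_Ropp. f_equal. rewrite ln_pow, Hlnr, mult_INR by lra. field. }
  assert (Hcp : forall m, Cmod (cpow q m) = s^(2*m)).
  { induction m. simpl. apply Cmod_1. simpl cpow. rewrite Cmod_mult, IHm.
    replace (2 * S m)%nat with (2 + 2*m)%nat by lia. rewrite pow_add, Hss. reflexivity. }
  assert (Hpp : forall N, Cmod (partial_prod z q N) = prodN (fun i => Cmod (1 + z * cpow q (S i))%C) N).
  { induction N. simpl. apply Cmod_1. simpl partial_prod. rewrite Cmod_mult, IHN. reflexivity. }
  set (f := fun i => Cmod (1 + z * cpow q (S i))%C).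
  assert (B1 : forall i, (i < n)%nat -> 0 <= / s^(2*(n-1-i)+1) * (1 - s^(2*(n-1-i)+1)) <= f i).
  { intros i Hi. set (k := (n - 1 - i)%nat).
    pose proof (pw_lt1 s Hs0 Hs1 (2*k+1) ltac:(lia)).
    assert (E : Cmod (z * cpow q (S i)) = / s^(2*k+1)).
    { rewrite Cmod_mult, Hz', Hcp. replace (2*n+1)%nat with (2 * S i + (2*k+1))%nat by (unfold k; lia).
      rewrite (pow_add s (2 * S i)). field. split; apply pow_nonzero; lra. }
    destruct (cmod_low (z * cpow q (S i))) as [L1 _]. rewrite E in L1.
    unfold f. split.
    - apply Rmult_le_pos. left; apply Rinv_0_lt_compat; lra. lra.
    - replace (/ s ^ (2 * k + 1) * (1 - s ^ (2 * k + 1))) with (/ s ^ (2 * k + 1) - 1) by (field; lra). lra. }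
  assert (B2 : forall j, 0 <= 1 - s^(2*j+1) <= f (n + j)%nat).
  { intros j. pose proof (pw_lt1 s Hs0 Hs1 (2*j+1) ltac:(lia)).
    assert (E : Cmod (z * cpow q (S (n + j))) = s^(2*j+1)).
    { rewrite Cmod_mult, Hz', Hcp. replace (2 * S (n + j))%nat with (2*n+1 + (2*j+1))%nat by lia.
      rewrite (pow_add s (2*n+1)). field. apply pow_nonzero; lra. }
    destruct (cmod_low (z * cpow q (S (n + j)))) as [_ L2]. rewrite E in L2.
    unfold f. lra. }
  set (C0 := PI^2/6 * sqrt (a * (a - 1))).
  assert (HK : K0 s <= C0).
  { unfold K0, C0. apply Rmult_le_compat_l.
    pose proof PI_RGT_0. apply Rdiv_le_0_compat; nra.
    rewrite Hss.
    assert (0 < 1 - r) by lra.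
    rewrite <- (sqrt_pow2 (s / (1 - r))) by (apply Rdiv_le_0_compat; lra).
    apply sqrt_le_1_alt.
    replace ((s / (1 - r))^2) with (r / (1 - r)^2) by (rewrite <- Hss; field; lra).
    apply (Rmult_le_reg_r ((1-r)^2)). nra.
    unfold Rdiv. rewrite Rmult_assoc, Rinv_l by nra.
    assert (0 <= (a * (1 - r) - 1) * ((a - 1) * (1 - r))) by (apply Rmult_le_pos; nra).
    nra. }
  assert (Hbound : forall K, / s^(n*n) * exp (- C0) * exp (- C0) <= Cmod (partial_prod z q (K + n))).
  { intros K. rewrite Hpp. fold f. rewrite Nat.add_comm, prodN_split.
    assert (P1 : prodN (fun k => / s^(2*k+1) * (1 - s^(2*k+1))) n <= prodN f n).
    { rewrite <- (prodN_rev (fun k => / s^(2*k+1) * (1 - s^(2*k+1)))). apply prodN_le. exact B1. }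
    rewrite prodN_mult, prodN_invpow in P1 by lra.
    assert (P2 : prodN (fun k => 1 - s^(2*k+1)) K <= prodN (fun j => f (n + j)%nat) K).
    { apply prodN_le. intros; apply B2. }
    pose proof (prod_bound s Hs0 Hs1 n). pose proof (prod_bound s Hs0 Hs1 K).
    assert (exp (- C0) <= exp (- K0 s)) by (apply exp_le_mono; lra).
    assert (0 < exp (- C0)) by apply exp_pos.
    assert (0 < / s^(n*n)) by (apply Rinv_0_lt_compat, pow_lt; lra).
    apply Rmult_le_compat.
    - apply Rmult_le_pos; lra.
    - lra.
    - apply Rle_trans with (/ s ^ (n * n) * prodN (fun k : nat => 1 - s ^ (2 * k + 1)) n); auto.
      apply Rmult_le_compat_l; lra.
    - lra. }
  assert (Hlim : is_lim_seq (fun N => Cmod (partial_prod z q N)) (Cmod U)).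
  { unfold is_lim_seq. eapply filterlim_comp. exact HU.
    apply (filterlim_norm (K := C_AbsRing) (V := C_NormedModule)). }
  apply (is_lim_seq_incr_n _ n) in Hlim.
  pose proof (is_lim_seq_le _ _ _ _ Hbound (is_lim_seq_const _) Hlim) as Hle. simpl in Hle.
  apply Rle_ge. rewrite HR.
  replace (- (PI ^ 2 / 3) * sqrt (a * (a - 1))) with (- C0 + - C0) by (unfold C0; field).
  rewrite exp_plus, <- Rmult_assoc. exact Hle.
Qed.
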